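(* Let $G$ be a graph with $m$ edges and $n$ vertices and let $t=\min\{m,\lceil \frac{n^2}{4}-\frac{n}{4}+\frac12\rceil\}$. Then $G$ is a $t$-interval-PCG.
   Context: All trees are unrooted with edges weighted by nonnegative reals; $d_T(u,v)$ is the weight of the path between leaves $u,v$ of $T$. A graph $G$ is a $k$-interval-PCG if there exist a tree $T$ whose leaf set is $V(G)$ and $k$ pairwise disjoint intervals $I_1,\ldots,I_k$ of nonnegative reals such that $\{u,v\}\in E(G)$ iff $d_T(u,v)\in I_i$ for some $i$. *)

(* Defs.v *)
From HB Require Import structures.
From mathcomp Require Import all_boot all_order all_algebra.
From mathcomp Require Import reals.
Set Implicit Arguments. Unset Strict Implicit. Unset Printing Implicit Defensive.
Import Order.TTheory GRing.Theory Num.Theory.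
Local Open Scope ring_scope.

Definition simple_graph (V : finType) (e : rel V) : Prop :=
  symmetric e /\ irreflexive e.

Definition num_edges (V : finType) (e : rel V) : nat :=
  #|[set [set p.1; p.2] | p in [set q : V * V | e q.1 q.2]]|.

Definition acyclic (W : finType) (adj : rel W) : Prop :=
  forall c : seq W, uniq c -> (3 <= size c)%N -> ~~ cycle adj c.

Definition is_tree (W : finType) (adj : rel W) : Prop :=
  [/\ symmetric adj, irreflexive adj,
      (forall x y : W, connect adj x y) & acyclic adj].

(* degree and leaves (a leaf is a vertex of degree at most 1; in a tree with
   at least two vertices this means degree exactly 1) *)
Definition degree (W : finType) (adj : rel W) (x : W) : nat :=
  #|[set y | adj x y]|.
Definition leaf (W : finType) (adj : rel W) (x : W) : bool :=
  (degree adj x <= 1)%N.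

(* simple path u = x0, x1, ..., xl = v, given as u :: p *)
Definition simple_path (W : finType) (adj : rel W) (u v : W) (p : seq W) : Prop :=
  [/\ path adj u p, last u p = v & uniq (u :: p)].

Definition path_weight (R : realType) (W : finType) (w : W -> W -> R)
  (u : W) (p : seq W) : R :=
  \sum_(ab <- zip (u :: p) p) w ab.1 ab.2.

Definition k_interval_PCG (R : realType) (V : finType) (e : rel V) (k : nat) : Prop :=
  exists (W : finType) (adj : rel W) (w : W -> W -> R) (f : V -> W)
         (I : 'I_k -> interval R),
    [/\ is_tree adj,
        (forall x y, adj x y -> 0 <= w x y /\ w x y = w y x),
        injective f /\ (forall x : W, leaf adj x <-> exists v, f v = x),
        (forall i (r : R), r \in I i -> 0 <= r) /\
        (forall i j, i != j -> forall r : R, r \in I i -> r \notin I j) &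
        (forall u v : V, u != v ->
           (e u v <-> exists p, simple_path adj (f u) (f v) p /\
                        exists i, path_weight w (f u) p \in I i))].

Definition bound_t (n : nat) : nat :=
  `| Num.ceil ((n%:R ^+ 2) / 4%:R - n%:R / 4%:R + 1 / 2%:R : rat) |%N.

(* Main.v *)
Require Import Defs.
From HB Require Import structures.
From mathcomp Require Import all_boot all_order all_algebra.
From mathcomp Require Import reals.
From mathcomp Require Import zify ring lra.
Set Implicit Arguments. Unset Strict Implicit. Unset Printing Implicit Defensive.
Import Order.TTheory GRing.Theory Num.Theory.
Local Open Scope ring_scope.

Lemma pow2_lt (a b d : nat) : (a < b)%N -> (b < d)%N -> (2 ^ a + 2 ^ b < 2 ^ d)%N.
Proof.
move=> ab bd.
have h1 : (2 ^ a < 2 ^ b)%N by rewrite ltn_exp2l.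
have h2 : (2 ^ b.+1 <= 2 ^ d)%N by rewrite leq_exp2l.
rewrite expnS in h2; lia.
Qed.

Lemma pow2_key (a b c d : nat) : (a < b)%N -> (c < d)%N ->
  (2 ^ a + 2 ^ b = 2 ^ c + 2 ^ d)%N -> a = c /\ b = d.
Proof.
move=> ab cd E.
case: (ltngtP b d) => bd.
- have := pow2_lt ab bd; lia.
- have := pow2_lt cd bd; lia.
- subst d; split => //; apply/eqP; rewrite -(eqn_exp2l _ _ (isT : (1 < 2)%N)).
  apply/eqP; lia.
Qed.

Lemma pow2_key2 (a b c d : nat) : a != b -> c != d ->
  (2 ^ a + 2 ^ b = 2 ^ c + 2 ^ d)%N -> (a = c /\ b = d) \/ (a = d /\ b = c).
Proof.
move=> ab cd E.
case: (ltngtP a b) ab => // ab _; case: (ltngtP c d) cd => // cd _.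
- by left; apply: pow2_key.
- right; apply: pow2_key => //; lia.
- have [] := pow2_key ab cd (_ : _ = _)%N; first lia. by right.
- have [] := pow2_key ab cd (_ : _ = _)%N; first lia. by left.
Qed.

Lemma bound_ok (n : nat) : ('C(n, 2) <= 2 * bound_t n)%N.
Proof.
case: n => [|m]; first by rewrite bin0n.
have hC : ('C(m.+1, 2) * 2 <= m.+1 * m)%N.
  rewrite bin2 /= -{2}(odd_double_half (m.+1 * m)) muln2; lia.
rewrite /bound_t.
set q := ((m.+1)%:R ^+ 2 / 4%:R - (m.+1)%:R / 4%:R + 1 / 2%:R : rat).
have qge : q <= (Num.ceil q)%:~R := ceil_ge q.
have hm : (0 : rat) <= m%:R by rewrite ler0n.
have q0 : -1 < q by rewrite /q -natr1; nra.
have z0 : 0 <= Num.ceil q by rewrite ceil_ge0.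
rewrite -(ler_nat rat) natrM natr_absz.
have -> : `|Num.ceil q| = Num.ceil q by rewrite ger0_norm.
have : ('C(m.+1, 2) * 2)%:R <= (m.+1 * m)%:R :> rat by rewrite ler_nat.
rewrite !natrM -natr1 => h.
move: qge; rewrite /q -natr1 => h2.
nra.
Qed.
Lemma in_pt (R : realType) (a x : R) : (x \in `[a, a]) = (x == a).
Proof. by rewrite in_itv /= eq_le andbC. Qed.

Lemma in_empty (R : realType) (x : R) : (x \in `]0, 0[) = false.
Proof. rewrite in_itv /=. case: (ltrP 0 x) => h //=. by rewrite ltNge ltW. Qed.

Lemma intervals1 (R : realType) (A B : seq R) (k : nat) :
  uniq A -> (forall x, x \in A -> x \notin B) ->
  (forall x, x \in A ++ B -> 0 <= x) ->
  (size A <= k)%N ->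
  exists I : 'I_k -> interval R,
   [/\ (forall i r, r \in I i -> 0 <= r),
       (forall i j, i != j -> forall r, r \in I i -> r \notin I j) &
       (forall x, x \in A ++ B -> ((exists i, x \in I i) <-> x \in A))].
Proof.
move=> uA dAB pos hk.
exists (fun i : 'I_k => if (i < size A)%N then `[nth 0 A i, nth 0 A i] else `]0, 0[).
split.
- move=> i r; case: ifP => hi; last by rewrite in_empty.
  rewrite in_pt => /eqP ->; apply: pos; by rewrite mem_cat mem_nth.
- move=> i j ij r; case: ifP => hi; last by rewrite in_empty.
  case: ifP => hj; last by rewrite in_empty.
  rewrite !in_pt => /eqP ->; apply/negP => /eqP /eqP.
  rewrite nth_uniq // => /eqP /val_inj /eqP; by rewrite (negbTE ij).
- move=> x xAB; split.
  + move=> [i]; case: ifP => hi; last by rewrite in_empty.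
    rewrite in_pt => /eqP ->; exact: mem_nth.
  + move=> xA; have hi : (index x A < k)%N by apply: leq_trans hk; rewrite index_mem.
    exists (Ordinal hi) => /=; rewrite index_mem xA in_pt nth_index //.
Qed.
Definition gapI (R : realType) (s : seq R) (i : nat) : interval R :=
  if (i <= size s)%N then
    Interval (if i == 0%N then BLeft 0 else BRight (nth 0 s i.-1))
             (if (i < size s)%N then BLeft (nth 0 s i) else BInfty _ false)
  else `]0, 0[.

Lemma in_gapI (R : realType) (s : seq R) i x :
  (x \in gapI s i) = [&& (i <= size s)%N, (i == 0%N) ==> (0 <= x),
     (i != 0%N) ==> (nth 0 s i.-1 < x) & (i < size s)%N ==> (x < nth 0 s i)].
Proof.
rewrite /gapI; case: ifP => hi; last by rewrite in_empty.
case: eqP => [->|_]; case: ifP => hr; rewrite in_itv /= ?andbT //.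
Qed.

Lemma intervals2 (R : realType) (A B : seq R) (k : nat) :
  uniq B -> (forall x, x \in A -> x \notin B) ->
  (forall x, x \in A ++ B -> 0 <= x) ->
  (size B < k)%N ->
  exists I : 'I_k -> interval R,
   [/\ (forall i r, r \in I i -> 0 <= r),
       (forall i j, i != j -> forall r, r \in I i -> r \notin I j) &
       (forall x, x \in A ++ B -> ((exists i, x \in I i) <-> x \in A))].
Proof.
move=> uB dAB pos hk.
set s := sort <=%O B.
have ss : sorted <%O s by rewrite sort_lt_sorted.
have sz : size s = size B by rewrite size_sort.
have ms : s =i B by move=> y; rewrite mem_sort.
have mono : forall i j, (i < size s)%N -> (j < size s)%N -> (i <= j)%N -> nth 0 s i <= nth 0 s j.
  by move=> i j hi hj hij; rewrite (lt_sorted_leq_nth 0 ss).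
have spos : forall i, (i < size s)%N -> 0 <= nth 0 s i.
  by move=> i hi; apply: pos; rewrite mem_cat -ms mem_nth ?orbT.
exists (fun i : 'I_k => gapI s i).
split.
- move=> i r; rewrite in_gapI => /and4P [hi h0 h1 _].
  move: h0 h1; case: eqP => [_ /= h _ //|hne _ /= h1].
  apply: le_trans (ltW h1); apply: spos.
  by case: (nat_of_ord i) hne hi => //= n _.
- move=> i j ij r.
  wlog lij : i j ij / (i < j)%N.
    move=> W; case: (ltngtP i j) => h; first exact: W.
      move=> a; apply/negP=> b; have ji : j != i by rewrite eq_sym.
      by have := W j i ji h b; rewrite a.
    by move/val_inj: h ij => ->; rewrite eqxx.
  rewrite !in_gapI => /and4P [hi _ _ h3] ; apply/negP => /and4P [hj _ h4 _].
  have jn0 : (nat_of_ord j != 0%N) by rewrite -lt0n; apply: leq_ltn_trans lij.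
  have ir : (i < size s)%N by apply: leq_trans lij hj.
  rewrite ir jn0 /= in h3 h4.
  have : nth 0 s i <= nth 0 s (nat_of_ord j).-1.
    apply: mono => //; first by apply: leq_trans hj; rewrite prednK ?lt0n.
    by rewrite -ltnS prednK ?lt0n.
  by rewrite leNgt (lt_trans h4 h3).
- move=> x xAB; split.
  + move=> [i]; rewrite in_gapI => /and4P [hi h0 h1 h2].
    move: xAB; rewrite mem_cat => /orP [//|xB]; exfalso.
    have := xB; rewrite -ms => xs; have hxi := index_mem x s; rewrite xs in hxi.
    have ex := nth_index 0 xs.
    case: (ltnP (index x s) i) => hc.
    * have ni : (nat_of_ord i != 0%N) by rewrite -lt0n; apply: leq_ltn_trans hc.
      rewrite ni /= in h1.
      have : nth 0 s (index x s) <= nth 0 s (nat_of_ord i).-1.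
        apply: mono => //; first by apply: leq_trans hi; rewrite prednK ?lt0n.
        by rewrite -ltnS prednK ?lt0n.
      by rewrite ex leNgt h1.
    * have ir : (i < size s)%N by apply: leq_ltn_trans hxi.
      rewrite ir /= in h2.
      have : nth 0 s i <= nth 0 s (index x s) by apply: mono.
      by rewrite ex leNgt h2.
  + move=> xA.
    have xs : x \notin s by rewrite ms; apply: dAB.
    set i := find (fun b => x < b) s.
    have hi : (i < k)%N by apply: leq_ltn_trans hk; rewrite -sz find_size.
    exists (Ordinal hi); rewrite in_gapI /= find_size /=.
    apply/and3P; split.
    * by apply/implyP => _; apply: pos; rewrite mem_cat xA.
    * apply/implyP => i0.
      have hlt : (i.-1 < i)%N by rewrite prednK ?lt0n.
      have := @before_find _ 0 (fun b => x < b) s i.-1 hlt => /negbT; rewrite -leNgt le_eqVlt => /orP [/eqP e|//].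
      exfalso; move/negP: xs; apply; rewrite -e mem_nth //.
      by apply: leq_trans hlt _; rewrite find_size.
    * by apply/implyP => hr; rewrite -has_find in hr; exact: (nth_find 0 hr).
Qed.
Definition starAdj (V : finType) : rel (option V) :=
  fun x y => (x == None) != (y == None).

Definition starW (R : realType) (V : finType) (c : V -> R) (x y : option V) : R :=
  match x, y with Some u, None => c u | None, Some v => c v | _, _ => 0 end.

Lemma star_path (V : finType) (u v : V) p : u != v ->
  simple_path (@starAdj V) (Some u) (Some v) p <-> p = [:: None; Some v].
Proof.
move=> uv; split.
- case: p => [|x [|y [|z q]]]; rewrite /simple_path /starAdj /=.
  + by case=> _ [] E; rewrite E eqxx in uv.
  + by case: x => [x|] [] //=.
  + case: x => [x|]; case: y => [y|]; case=> //= _ -> //.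
  + case: x => [x|]; case: y => [y|]; case: z => [z|]; case => //= _ _;
    by rewrite andbF.
- move=> ->; split => //=; rewrite !inE /=.
  by rewrite andbT; apply: contra uv => /eqP [] ->.
Qed.

Lemma star_tree (V : finType) : is_tree (@starAdj V).
Proof.
split.
- by move=> x y; rewrite /starAdj eq_sym.
- by move=> x; rewrite /starAdj eqxx.
- move=> x y.
  have h : forall z : option V, connect (@starAdj V) None z.
    move=> [z|]; last exact: connect0.
    by apply: connect1.
  have h' : forall z : option V, connect (@starAdj V) z None.
    move=> [z|]; last exact: connect0.
    by apply: connect1.
  exact: connect_trans (h' x) (h y).
- move=> [|a [|b [|c q]]] //= U _.
  case: q U => [|d q].
  + by case: a => [a|]; case: b => [b|]; case: c => [c|].
  + rewrite /cycle /= /starAdj.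
    case: a => [a|]; case: b => [b|]; case: c => [c|]; case: d => [d|] //=;
      rewrite ?andbF //= !inE /=; case/andP => // /negP; rewrite ?eqxx ?orbT //.
Qed.

Lemma intervals (R : realType) (A B : seq R) (k : nat) :
  uniq A -> uniq B -> (forall x, x \in A -> x \notin B) ->
  (forall x, x \in A ++ B -> 0 <= x) ->
  (size A <= k)%N \/ (size B < k)%N ->
  exists I : 'I_k -> interval R,
   [/\ (forall i r, r \in I i -> 0 <= r),
       (forall i j, i != j -> forall r, r \in I i -> r \notin I j) &
       (forall x, x \in A ++ B -> ((exists i, x \in I i) <-> x \in A))].
Proof.
move=> uA uB d p [h|h]; [exact: intervals1 | exact: intervals2].
Qed.

Lemma pair_eq (V : finType) (u v a b : V) : u != v ->
  [set u; v] = [set a; b] -> (u = a /\ v = b) \/ (u = b /\ v = a).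
Proof.
move=> uv E.
have hu : u \in [set a; b] by rewrite -E set21.
have hv : v \in [set a; b] by rewrite -E set22.
move: hu hv; rewrite !inE => /orP [] /eqP hu /orP [] /eqP hv; subst.
- by rewrite eqxx in uv.
- by left.
- by right.
- by rewrite eqxx in uv.
Qed.

Definition Gn (V : finType) (X : {set V}) : nat := (\sum_(u in X) 2 ^ enum_rank u)%N.

Lemma Gn2 (V : finType) (u v : V) : u != v ->
  Gn [set u; v] = (2 ^ enum_rank u + 2 ^ enum_rank v)%N.
Proof.
move=> uv; rewrite /Gn big_setU1 ?inE //= big_set1.
by [].
Qed.

Lemma Gn_inj (V : finType) (X Y : {set V}) : #|X| == 2 -> #|Y| == 2 ->
  Gn X = Gn Y -> X = Y.
Proof.
move=> /cards2P [a [b [ab ->]]] /cards2P [c [d [cd ->]]].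
rewrite !Gn2 // => E.
have ab' : (nat_of_ord (enum_rank a) != enum_rank b).
  by apply: contra ab => /eqP /val_inj /enum_rank_inj ->.
have cd' : (nat_of_ord (enum_rank c) != enum_rank d).
  by apply: contra cd => /eqP /val_inj /enum_rank_inj ->.
have [[/val_inj /enum_rank_inj -> /val_inj /enum_rank_inj ->]|
      [/val_inj /enum_rank_inj -> /val_inj /enum_rank_inj ->]] := pow2_key2 ab' cd' E.
  by [].
by rewrite setUC.
Qed.

Lemma small_case (R : realType) (V : finType) (e : rel V) k :
  (#|V| <= 1)%N -> k_interval_PCG R e k.
Proof.
move=> hn.
have alleq : forall x y : V, x = y.
  move=> x y; apply/eqP; apply: contraT => xy.
  have : (#|[set x; y]| <= #|V|)%N by apply: max_card.
  by rewrite cards2 xy; move: hn; case: #|V| => [|[]].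
exists V, (fun _ _ => false), (fun _ _ => 0), id, (fun _ => `]0, 0[).
split.
- split => //.
  + by move=> x y; rewrite (alleq x y) connect0.
  + by move=> [|a [|b c]] //= _ _; rewrite /cycle /= ; case: c.
- by [].
- split; first exact: inj_id.
  move=> x; split => [_|_]; first by exists x.
  rewrite /leaf /degree (_ : [set y | _] = set0) ?cards0 //; apply/setP => y; rewrite !inE.
- by split => [i r|i j _ r]; rewrite in_empty.
- by move=> u v; rewrite (alleq u v) eqxx.
Qed.

Theorem theorem3 (R : realType) (V : finType) (e : rel V) :
  simple_graph e ->
  k_interval_PCG R e (minn (num_edges e) (bound_t #|V|)).
Proof.
move=> [esym eirr].
case: (leqP #|V| 1) => hn; first exact: small_case.
set ES := [set [set p.1; p.2] | p in [set q : V * V | e q.1 q.2]].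
set NES := [set [set p.1; p.2] | p in [set q : V * V | (q.1 != q.2) && ~~ e q.1 q.2]].
have numE : num_edges e = #|ES| by [].
set G := fun X : {set V} => (Gn X)%:R : R.
set A := undup [seq G X | X <- enum ES].
set B := undup [seq G X | X <- enum NES].
have ES2 : forall X, X \in ES -> #|X| == 2.
  move=> X /imsetP [[a b]]; rewrite inE /= => eab ->.
  apply/cards2P; exists a, b; split => //; apply: contraTneq eab => ->; by rewrite eirr.
have NES2 : forall X, X \in NES -> #|X| == 2.
  move=> X /imsetP [[a b]]; rewrite inE /= => /andP [ab _] ->.
  by apply/cards2P; exists a, b.
have ESuv : forall u v, u != v -> ([set u; v] \in ES) = e u v.
  move=> u v uv; apply/idP/idP.
  + move=> /imsetP [[a b]]; rewrite inE /= => eab /(pair_eq uv) [[-> ->]|[-> ->]] //.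
    by rewrite esym.
  + by move=> euv; apply/imsetP; exists (u, v); rewrite ?inE.
have NESuv : forall u v, u != v -> ([set u; v] \in NES) = ~~ e u v.
  move=> u v uv; apply/idP/idP.
  + move=> /imsetP [[a b]]; rewrite inE /= => /andP [_ eab] /(pair_eq uv) [[-> ->]|[-> ->]] //.
    by rewrite esym.
  + by move=> euv; apply/imsetP; exists (u, v); rewrite ?inE // uv.
have disj : forall X, X \in ES -> X \in NES -> False.
  move=> X XE /imsetP [[a b]]; rewrite inE /= => /andP [ab eab] XD.
  by move: XE; rewrite XD ESuv // (negbTE eab).
have Ginj : forall X Y : {set V}, #|X| == 2 -> #|Y| == 2 -> G X = G Y -> X = Y.
  by move=> X Y hX hY /eqP; rewrite eqr_nat => /eqP; apply: Gn_inj.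
have dAB : forall x, x \in A -> x \notin B.
  move=> x; rewrite !mem_undup => /mapP [X XE ->]; apply/negP => /mapP [Y YN].
  rewrite mem_enum in XE; rewrite mem_enum in YN.
  move/(Ginj _ _ (ES2 _ XE) (NES2 _ YN)) => XY; subst Y; exact: disj XE YN.
have pos : forall x, x \in A ++ B -> 0 <= x.
  move=> x; rewrite mem_cat !mem_undup => /orP [] /mapP [X _ ->]; exact: ler0n.
have sA : (size A <= #|ES|)%N.
  by apply: leq_trans (size_undup _) _; rewrite size_map -cardE.
have sAB : (size A + size B <= 'C(#|V|, 2))%N.
  rewrite -size_cat -card_draws cardE -(size_map G).
  apply: uniq_leq_size.
    rewrite cat_uniq !undup_uniq /= andbT; apply/hasPn => x xB; apply/negP => xA.
    by move: (dAB x xA); rewrite xB.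
  move=> x; rewrite mem_cat !mem_undup => /orP [] /mapP [X XE ->]; apply: map_f;
    rewrite mem_enum inE; rewrite mem_enum in XE; [exact: ES2| exact: NES2].
have bnd := bound_ok #|V|.
have hk : (size A <= minn (num_edges e) (bound_t #|V|))%N \/
          (size B < minn (num_edges e) (bound_t #|V|))%N.
  rewrite numE; lia.
have [I [Ipos Idisj Icov]] := intervals (undup_uniq _) (undup_uniq _) dAB pos hk.
set c := fun u : V => (2 ^ enum_rank u)%:R : R.
have Guv : forall u v, u != v -> G [set u; v] = c u + c v.
  by move=> u v uv; rewrite /G Gn2 // natrD.
have GA : forall u v, u != v -> (G [set u; v] \in A) = e u v.
  move=> u v uv; case euv: (e u v).
  + by rewrite mem_undup; apply: map_f; rewrite mem_enum ESuv.
  + have : G [set u; v] \in B.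
      by rewrite mem_undup; apply: map_f; rewrite mem_enum NESuv // euv.
    by move=> hB; apply/negP => /dAB; rewrite hB.
have GAB : forall u v, u != v -> G [set u; v] \in A ++ B.
  move=> u v uv; rewrite mem_cat; case euv: (e u v).
  + by rewrite GA // euv.
  + by apply/orP; right; rewrite mem_undup; apply: map_f; rewrite mem_enum NESuv // euv.
exists (option V), (@starAdj V), (starW c), Some, I.
split.
- exact: star_tree.
- move=> [x|] [y|] //= _; split => //; exact: ler0n.
- split; first exact: Some_inj.
  move=> x; rewrite /leaf /degree; split.
  + case: x => [x _|]; first by exists x.
    have [u [v [uv _]]] : exists u v : V, u != v /\ true.
      move: hn; rewrite -cardsT => /card_gt1P [u [v [_ _ uv]]]; by exists u, v.
    have : (#|[set Some u; Some v]| <= #|[set y | @starAdj V None y]|)%N.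
      apply: subset_leq_card; apply/subsetP => y; rewrite !inE.
      by case/orP => /eqP ->.
    rewrite cards2 (_ : (Some u != Some v) = true); last first.
      by apply: contra uv => /eqP [] ->.
    by move=> h1 h2; have := leq_trans h1 h2.
  + move=> [v <-].
    have : [set y | starAdj (Some v) y] \subset [set None].
      by apply/subsetP => [[y|]]; rewrite !inE.
    by move/subset_leq_card; rewrite cards1.
- by split.
- move=> u v uv.
  have wt : path_weight (starW c) (Some u) [:: None; Some v] = G [set u; v].
    by rewrite /path_weight /= !big_cons big_nil /= addr0 Guv.
  rewrite -(GA u v uv) -(Icov _ (GAB u v uv)); split.
  + by move=> [i hi]; exists [:: None; Some v]; split; [apply/star_path|exists i; rewrite wt].
  + by move=> [p [/(star_path _ uv) -> [i hi]]]; exists i; rewrite -wt.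
Qed.
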